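(* Let $\mathcal{I}$ be an ideal on $\mathbf{N}$, $N=c_0(\mathcal{I})\cap\ell_\infty$, and $\nu:\mathcal{P}(\mathbf{N})\to\mathbf{R}$ an $\mathcal{I}$-invariant normalized capacity. Then the functional $V:\ell_\infty\to\mathbf{R}$, $V(x)=\int_{\mathbf{N}}x\,\mathrm{d}\nu$ (Choquet integral), is $N$-invariant: $V(x)=V(y)$ whenever $x,y\in\ell_\infty$ and $x-y\in N$.
   Context: An ideal on $\mathbf{N}$ is a family of subsets closed under subsets and finite unions, not containing $\mathbf{N}$, and containing all finite sets. $c_0(\mathcal{I})$ is the set of real sequences $x$ with $\{n:|x_n|\ge\varepsilon\}\in\mathcal{I}$ for all $\varepsilon>0$; $\ell_\infty$ is the space of bounded real sequences. A normalized capacity on $\mathcal{P}(\mathbf{N})$ is monotone with $\nu(\emptyset)=0$, $\nu(\mathbf{N})=1$; it is $\mathcal{I}$-invariant if $\nu(A)=\nu(B)$ whenever $A\triangle B\in\mathcal{I}$. Choquet integral: $\int x\,\mathrm{d}\nu=\int_0^\infty\nu(\{n:x_n\ge t\})\,\mathrm{d}t+\int_{-\infty}^0[\nu(\{n:x_n\ge t\})-1]\,\mathrm{d}t$. *)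

(* Defs.v *)
From HB Require Import structures.
From mathcomp Require Import all_boot all_order all_algebra.
From mathcomp Require Import all_classical all_reals all_analysis.
Set Implicit Arguments. Unset Strict Implicit. Unset Printing Implicit Defensive.
Import Order.TTheory GRing.Theory Num.Theory.
Local Open Scope classical_set_scope.
Local Open Scope ring_scope.

Definition is_ideal (I : set (set nat)) : Prop :=
  (forall A B, B `<=` A -> I A -> I B) /\
  (forall A B, I A -> I B -> I (A `|` B)) /\
  ~ I setT /\
  (forall A, finite_set A -> I A).

Definition symdiff (A B : set nat) : set nat := (A `\` B) `|` (B `\` A).

Definition c0_ideal {R : realType} (I : set (set nat)) (x : nat -> R) : Prop :=
  forall eps : R, 0 < eps -> I [set n | eps <= `|x n|].

Definition bounded_seq {R : realType} (x : nat -> R) : Prop :=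
  exists M : R, forall n, `|x n| <= M.

Definition normalized_capacity {R : realType} (nu : set nat -> R) : Prop :=
  (forall A B, A `<=` B -> nu A <= nu B) /\ nu set0 = 0 /\ nu setT = 1.

Definition ideal_invariant {R : realType} (I : set (set nat)) (nu : set nat -> R) : Prop :=
  forall A B, I (symdiff A B) -> nu A = nu B.

Definition choquet_ext {R : realType} (nu : set nat -> R) (x : nat -> R) : \bar R :=
  ((\int[lebesgue_measure]_(t in `[0%R, +oo[%classic) (nu [set n | t <= x n])%:E)
   + (\int[lebesgue_measure]_(t in `]-oo, 0%R[%classic) (nu [set n | t <= x n] - 1)%:E))%E.

(* The real-valued functional V (finite for bounded x). *)
Definition choquet {R : realType} (nu : set nat -> R) (x : nat -> R) : R :=
  fine (choquet_ext nu x).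

(* Main.v *)
Require Import Defs.
From HB Require Import structures.
From mathcomp Require Import all_boot all_order all_algebra.
From mathcomp Require Import all_classical all_reals all_analysis.
From mathcomp Require Import lra measurable_realfun.
Import Order.TTheory GRing.Theory Num.Theory.
Local Open Scope classical_set_scope.
Local Open Scope ring_scope.

Lemma count_lt (R : realType) (F G : R -> R) :
  (forall s t, s < t -> G t <= F s) -> countable [set t | F t < G t].
Proof.
move=> H.
have : forall t, exists q : rat, F t < G t -> F t < ratr q < G t.
  move=> t; case: (boolP (F t < G t)) => [lt|_]; last by exists 0.
  have [q] := rat_in_itvoo lt; rewrite in_itv /= => hq; by exists q.
move=> /choice [g Hg].
apply/countable_injP; exists (fun t => pickle (g t)).
move=> a b; rewrite !inE /= => ha hb /(pcan_inj (@pickleK rat)) eqg.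
case: (ltgtP a b) => // ab.
- have /andP[ha1 _] := Hg a ha; have /andP[_ hb2] := Hg b hb.
  have h := H _ _ ab; rewrite eqg in ha1.
  by have := lt_trans hb2 (le_lt_trans h ha1); rewrite ltxx.
- have /andP[hb1 _] := Hg b hb; have /andP[_ ha2] := Hg a ha.
  have h := H _ _ ab; rewrite -eqg in hb1.
  by have := lt_trans ha2 (le_lt_trans h hb1); rewrite ltxx.
Qed.

Lemma cmp_shift (R : realType) (I : set (set nat)) (nu : set nat -> R)
  (x y : nat -> R) :
  (forall A B, B `<=` A -> I A -> I B) ->
  (forall A B, A `<=` B -> nu A <= nu B) ->
  ideal_invariant I nu ->
  (forall eps : R, 0 < eps -> I [set n | eps <= `|x n - y n|]) ->
  forall s t, s < t -> nu [set n | t <= x n] <= nu [set n | s <= y n].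
Proof.
move=> hsub hmono hinv hc s t st.
set E := [set n | t - s <= `|x n - y n|].
have IE : I E by apply: hc; rewrite subr_gt0.
have -> : nu [set n | t <= x n] = nu ([set n | t <= x n] `\` E).
  apply: hinv; apply: hsub IE => n; rewrite /symdiff.
  move=> [[h1 h2]|[[h1 h2] h3]]; last by exfalso; exact: h3.
  have [//|nE] := pselect (E n); exfalso; exact: h2 (conj h1 nE).
apply: hmono => n [/= h1 h2].
have h3 : `|x n - y n| < t - s by rewrite ltNge; apply/negP.
have := ler_norm (x n - y n); lra.
Qed.

Lemma int_eq (R : realType) (F G : R -> R) (D : set R) (c : R) :
  measurable D ->
  {homo F : a b / a <= b >-> b <= a} -> {homo G : a b / a <= b >-> b <= a} ->
  (forall s t, s < t -> G t <= F s) -> (forall s t, s < t -> F t <= G s) ->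
  (\int[lebesgue_measure]_(t in D) (F t - c)%:E =
   \int[lebesgue_measure]_(t in D) (G t - c)%:E)%E.
Proof.
move=> mD hF hG H1 H2.
apply: ae_eq_integral => //.
- apply/measurable_EFinP; apply: nonincreasing_measurable => // a b ab.
  by rewrite lerB // hF.
- apply/measurable_EFinP; apply: nonincreasing_measurable => // a b ab.
  by rewrite lerB // hG.
have N1 : forall (F G : R -> R), (forall s t, s < t -> G t <= F s) ->
    (@lebesgue_measure R).-negligible [set t | F t < G t].
  move=> F' G' H; exists [set t | F' t < G' t]; split => //.
  - apply: countable_measurable; first by move=> ?; exact: measurable_set1.
    exact: count_lt.
  - exact/countable_lebesgue_measure0/count_lt.
apply: negligibleS (negligibleU (N1 _ _ H1) (N1 _ _ H2)) => t /= nt.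
have [h|h|h] := ltgtP (F t) (G t); [by left|by right|].
by exfalso; apply: nt => _; rewrite h.
Qed.

Theorem mainTheorem14 (R : realType) (I : set (set nat)) (nu : set nat -> R) :
  is_ideal I -> normalized_capacity nu -> ideal_invariant I nu ->
  forall x y : nat -> R, bounded_seq x -> bounded_seq y ->
  (c0_ideal I (x \- y) /\ bounded_seq (x \- y)) ->
  choquet nu x = choquet nu y.
Proof.
move=> [hsub _] [hmono _] hinv x y _ _ [hc _].
have hc1 : forall eps : R, 0 < eps -> I [set n | eps <= `|x n - y n|].
  by move=> e he; exact: (hc e he).
have hc2 : forall eps : R, 0 < eps -> I [set n | eps <= `|y n - x n|].
  move=> e he; rewrite (_ : [set n | e <= `|y n - x n|] =
      [set n | e <= `|x n - y n|]); first exact: hc1.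
  by apply/seteqP; split => n /=; rewrite distrC.
have H1 := @cmp_shift R I nu x y hsub hmono hinv hc1.
have H2 := @cmp_shift R I nu y x hsub hmono hinv hc2.
have nF : forall z : nat -> R, {homo (fun t => nu [set n | t <= z n]) :
    a b / a <= b >-> b <= a}.
  by move=> z a b ab; apply: hmono => n /= /(le_trans ab).
rewrite /choquet /choquet_ext; congr (fine (_ + _))%E.
- transitivity (\int[lebesgue_measure]_(t in `[0%R, +oo[%classic)
      (nu [set n | t <= x n] - 0)%:E)%E.
    by apply: eq_integral => t _; rewrite subr0.
  transitivity (\int[lebesgue_measure]_(t in `[0%R, +oo[%classic)
      (nu [set n | t <= y n] - 0)%:E)%E.
    by apply: int_eq => //; exact: measurable_itv.
  by apply: eq_integral => t _; rewrite subr0.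
- by apply: int_eq => //; exact: measurable_itv.
Qed.
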